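(* Under the regularity assumption below except for the gain function, suppose in addition that $\nabla^2h$ is constant on $\mathbb{R}^d$ ($h$ is a strictly convex quadratic) and $\mu_{f/h}>0$. Then the regularity assumption holds with gain function $G\equiv1$, and Bregman-SAGA with constant step size $\eta_t=1/(8L_{f/h})$ satisfies, for all $t\ge0$, $$\mathbb{E}[\psi_t]\le\Big(1-\min\big(\tfrac{1}{8\kappa_{f/h}},\tfrac{1}{2n}\big)\Big)^t\psi_0,$$ where $\kappa_{f/h}=L_{f/h}/\mu_{f/h}$.
   Context: For differentiable $\varphi$, $D_\varphi(x,y)=\varphi(x)-\varphi(y)-\nabla\varphi(y)^\top(x-y)$; $h^*$ is the convex conjugate of $h$. $f$ is $L$-relatively smooth and $\mu$-relatively strongly convex w.r.t. $h$ if $\mu D_h(x,y)\le D_f(x,y)\le LD_h(x,y)$ for all $x,y$. Regularity assumption: $f=\frac1n\sum_{i=1}^nf_i$ with each $f_i$ convex and $L_{f/h}$-relatively smooth w.r.t. $h$, $f$ is $\mu_{f/h}$-relatively strongly convex w.r.t. $h$, and $G$ is a gain function such that for all $x,y,v\in\mathbb{R}^d$ and $\lambda\in[-1,1]$: $D_{h^*}(x+\lambda v,x)\le G(x,y,v)\lambda^2D_{h^*}(y+v,y)$. The minimizer $x^\star$ of $f$ satisfies $\nabla f(x^\star)=0$. Bregman-SAGA: set $\phi_i^0=x_0$ for all $i$; at iteration $t$, pick $i_t$ uniformly in $\{1,\dots,n\}$, set $g_t=\nabla f_{i_t}(x_t)-\nabla f_{i_t}(\phi^t_{i_t})+\frac1n\sum_{j=1}^n\nabla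 f_j(\phi^t_j)$, $\nabla h(x_{t+1})=\nabla h(x_t)-\eta_tg_t$, $\phi^{t+1}_{i_t}=x_t$, $\phi^{t+1}_j=\phi^t_j$ for $j\ne i_t$. $H_t=\frac1n\sum_{i=1}^nD_{f_i}(\phi_i^t,x^\star)$ and $\psi_t=\frac{1}{\eta_t}D_h(x^\star,x_t)+\frac n2H_t$. *)

(* Defs.v *)
From HB Require Import structures.
From mathcomp Require Import all_boot all_order all_algebra.
From mathcomp Require Import all_classical all_reals all_analysis.
Set Implicit Arguments. Unset Strict Implicit. Unset Printing Implicit Defensive.
Import Order.TTheory GRing.Theory Num.Theory.
Import numFieldNormedType.Exports.
Local Open Scope classical_set_scope.
Local Open Scope ring_scope.

Section Defs.
Variables (R : realType) (d : nat).
Local Notation V := 'rV[R]_d.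

Definition dot (x y : V) : R := \sum_(j < d) x 0 j * y 0 j.

Definition grad (phi : V -> R) (x : V) : V :=
  \row_(j < d) ('d phi x (delta_mx 0 j : V)).

Definition bregman (phi : V -> R) (x y : V) : R :=
  phi x - phi y - dot (grad phi y) (x - y).

Definition conj_fun (h : V -> R) (y : V) : R :=
  sup (range (fun x : V => dot y x - h x)).

Definition convex_fun (f : V -> R) : Prop :=
  forall (x y : V) (t : R), 0 <= t <= 1 ->
    f ((1 - t) *: x + t *: y) <= (1 - t) * f x + t * f y.

Definition differentiable_everywhere (f : V -> R) : Prop :=
  forall x : V, differentiable f x.

Definition rel_smooth (L : R) (f h : V -> R) : Prop :=
  forall x y : V, bregman f x y <= L * bregman h x y.

Definition rel_strongly_convex (mu : R) (f h : V -> R) : Prop :=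
  forall x y : V, mu * bregman h x y <= bregman f x y.

Definition gain_condition (h : V -> R) (G : V -> V -> V -> R) : Prop :=
  forall (x y v : V) (lam : R), -1 <= lam <= 1 ->
    bregman (conj_fun h) (x + lam *: v) x
      <= G x y v * lam ^+ 2 * bregman (conj_fun h) (y + v) y.

Definition quad (A : 'M[R]_d) (b : V) (c : R) (x : V) : R :=
  2^-1 * (x *m A *m x^T) 0 0 + dot b x + c.

(* ---------- Bregman-SAGA ----------
   A history is a list of sampled indices, MOST RECENT FIRST:
   [:: i_{t-1}; ...; i_0]; the empty history corresponds to t = 0.
   X : seq 'I_n -> V gives the iterate x_t after that history. *)
Section SAGA.
Variables (n : nat) (x0 : V) (X : seq 'I_n -> V).

Fixpoint saga_phi (s : seq 'I_n) (j : 'I_n) : V :=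
  match s with
  | [::] => x0
  | i :: s' => if j == i then X s' else saga_phi s' j
  end.

Variable F : 'I_n -> V -> R.

(* g_t when i_t = i and the history before step t is s. *)
Definition saga_g (s : seq 'I_n) (i : 'I_n) : V :=
  grad (F i) (X s) - grad (F i) (saga_phi s i)
  + n%:R^-1 *: \sum_(j < n) grad (F j) (saga_phi s j).

Definition is_saga_iterates (h : V -> R) (eta : R) : Prop :=
  X [::] = x0 /\
  forall (s : seq 'I_n) (i : 'I_n),
    grad h (X (i :: s)) = grad h (X s) - eta *: saga_g s i.

Definition saga_H (xstar : V) (s : seq 'I_n) : R :=
  n%:R^-1 * \sum_(i < n) bregman (F i) (saga_phi s i) xstar.

Definition saga_psi (h : V -> R) (eta : R) (xstar : V) (s : seq 'I_n) : R :=
  eta^-1 * bregman h xstar (X s) + n%:R / 2 * saga_H xstar s.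

Definition expect_t (t : nat) (Y : seq 'I_n -> R) : R :=
  (n%:R ^+ t)^-1 * \sum_(s : t.-tuple 'I_n) Y (tval s).

End SAGA.
End Defs.

(* Main.v *)
Require Import Defs.
From HB Require Import structures.
From mathcomp Require Import all_boot all_order all_algebra.
From mathcomp Require Import all_classical all_reals all_analysis.
From mathcomp Require Import ring lra.
Import Order.TTheory GRing.Theory Num.Theory.
Import numFieldNormedType.Exports.
Local Open Scope ring_scope.
Set Implicit Arguments. Unset Strict Implicit. Unset Printing Implicit Defensive.

Section S.
Variables (R : realType) (d : nat).
Local Notation V := 'rV[R]_d.

Definition bil (M : 'M[R]_d) (x y : V) : R := (x *m M *m y^T) 0 0.

Lemma dotE (u v : V) : dot u v = (u *m v^T) 0 0.
Proof. by rewrite /dot mxE; apply: eq_bigr => j _; rewrite mxE. Qed.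

Lemma dotC (u v : V) : dot u v = dot v u.
Proof. by rewrite /dot; apply: eq_bigr => j _; rewrite mulrC. Qed.

Lemma dotDl (u w v : V) : dot (u + w) v = dot u v + dot w v.
Proof. by rewrite /dot -big_split; apply: eq_bigr => j _; rewrite mxE mulrDl. Qed.

Lemma dotZl (a : R) (u v : V) : dot (a *: u) v = a * dot u v.
Proof. by rewrite /dot mulr_sumr; apply: eq_bigr => j _; rewrite mxE mulrA. Qed.

Lemma dotNl (u v : V) : dot (- u) v = - dot u v.
Proof. by rewrite -scaleN1r dotZl mulN1r. Qed.

Lemma dotBl (u w v : V) : dot (u - w) v = dot u v - dot w v.
Proof. by rewrite dotDl dotNl. Qed.

Lemma dotDr (u w v : V) : dot v (u + w) = dot v u + dot v w.
Proof. by rewrite !(dotC v) dotDl. Qed.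
Lemma dotZr (a : R) (u v : V) : dot v (a *: u) = a * dot v u.
Proof. by rewrite !(dotC v) dotZl. Qed.
Lemma dotBr (u w v : V) : dot v (u - w) = dot v u - dot v w.
Proof. by rewrite !(dotC v) dotBl. Qed.
Lemma dot0l (v : V) : dot 0 v = 0.
Proof. by rewrite /dot big1 // => j _; rewrite mxE mul0r. Qed.
Lemma dot0r (v : V) : dot v 0 = 0.
Proof. by rewrite dotC dot0l. Qed.

Lemma dot_suml (I : finType) (g : I -> V) (v : V) :
  dot (\sum_i g i) v = \sum_i dot (g i) v.
Proof.
rewrite /dot exchange_big /=; apply: eq_bigr => j _.
by rewrite summxE mulr_suml.
Qed.

Lemma dot_grad (f : V -> R) x v : dot (grad f x) v = 'd f x v.
Proof.
have e : v = \sum_(j < d) v 0 j *: (delta_mx 0 j : V).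
  apply/rowP => k; rewrite summxE (bigD1 k) //= big1 ?addr0.
    by rewrite !mxE !eqxx mulr1.
  by move=> j /negPf jk; rewrite !mxE eq_sym jk andbF mulr0.
rewrite [in RHS]e linear_sum /dot; apply: eq_bigr => j _.
rewrite linearZ /= !mxE /= mulrC.
by [].
Qed.

End S.

Section S.
Variables (R : realType) (d : nat).
Local Notation V := 'rV[R]_d.

Lemma is_diff_coord j (x : V) : is_diff x (fun y : V => y 0 j) (fun y : V => y 0 j).
Proof.
have cl : linear (fun y : V => y 0 j) by move=> a u w; rewrite !mxE.
pose glM := GRing.isLinear.Build _ _ _ _ _ cl.
pose gL : {linear V -> R} := HB.pack (fun y : V => y 0 j) glM.
have cc : continuous gL by exact: coord_continuous.
apply: DiffDef.
  by apply: (@linear_differentiable _ _ _ gL).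
by apply: (@diff_lin _ _ _ gL).
Qed.

Lemma is_diff_sum n (g dg : 'I_n -> V -> R) (x : V) :
  (forall i, is_diff x (g i) (dg i)) ->
  is_diff x (fun y => \sum_(i < n) g i y) (fun y => \sum_(i < n) dg i y).
Proof.
elim: n g dg => [|n IH] g dg H.
  have -> : (fun y : V => \sum_(i < 0) g i y) = cst 0.
    by apply/funext => y; rewrite big_ord0.
  have -> : (fun y : V => \sum_(i < 0) dg i y) = 0.
    by apply/funext => y; rewrite big_ord0.
  exact: is_diff_cst.
have -> : (fun y : V => \sum_(i < n.+1) g i y) =
   (fun y => \sum_(i < n) g (widen_ord (leqnSn n) i) y) + g ord_max.
  by apply/funext => y; rewrite big_ord_recr.
have -> : (fun y : V => \sum_(i < n.+1) dg i y) =
   (fun y => \sum_(i < n) dg (widen_ord (leqnSn n) i) y) + dg ord_max.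
  by apply/funext => y; rewrite big_ord_recr.
by apply: is_diffD.
Qed.


Lemma is_diff_ext (f g df dg : V -> R) (x : V) :
  f = g -> df = dg -> is_diff x f df -> is_diff x g dg.
Proof. by move=> -> ->. Qed.

Lemma is_diff_lin (N : 'M[R]_d) k (x : V) :
  is_diff x (fun y : V => (y *m N) 0 k) (fun y : V => (y *m N) 0 k).
Proof.
apply: (@is_diff_ext (fun y => \sum_j N j k *: (fun y : V => y 0 j) y)
          _ (fun y => \sum_j N j k *: (fun y : V => y 0 j) y)).
- by apply/funext => y; rewrite mxE; apply: eq_bigr => j _; rewrite mulrC.
- by apply/funext => y; rewrite mxE; apply: eq_bigr => j _; rewrite mulrC.
apply: is_diff_sum => j.
apply: is_diffZ; exact: is_diff_coord.
Qed.

Lemma bilC (M : 'M[R]_d) (x y : V) : M^T = M -> bil M x y = bil M y x.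
Proof.
move=> sym; rewrite /bil -[in RHS]sym.
rewrite -[in RHS](trmxK y) -!trmx_mul mulmxA.
by rewrite [RHS]mxE.
Qed.

Lemma quad_is_diff (M : 'M[R]_d) b c (x : V) : M^T = M ->
  is_diff x (quad M b c) (fun v => bil M x v + dot b v).
Proof.
move=> sym.
apply: (@is_diff_ext
  ((2^-1 : R) *: (\sum_(k < d) ((fun y : V => (y *m M) 0 k) * (fun y : V => y 0 k)))
   + (\sum_(k < d) (b 0 k) *: (fun y : V => y 0 k)) + cst c)
  _
  ((2^-1 : R) *: (\sum_(k < d) ((x *m M) 0 k *: (fun y : V => y 0 k) + x 0 k *: (fun y : V => (y *m M) 0 k)))
   + (\sum_(k < d) (b 0 k) *: (fun y : V => y 0 k)) + 0)).
- apply/funext => y; rewrite /quad /bil /dot /= !fct_sumE /=.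
  rewrite [(_ *m y^T) 0 0]mxE; congr (_ * _ + _ + _).
    by apply: eq_bigr => k _; rewrite [y^T _ _]mxE.
- apply/funext => v; rewrite /dot /= !fct_sumE /= addr0.
  rewrite -[LHS]/(2^-1 * (\sum_(i < d) ((x *m M) 0 i * v 0 i + x 0 i * (v *m M) 0 i)) + \sum_(i < d) b 0 i * v 0 i).
  congr (_ + _).
  have e1 : \sum_(i < d) (x *m M) 0 i * v 0 i = bil M x v.
    by rewrite /bil [(_ *m v^T) 0 0]mxE; apply: eq_bigr => i _; rewrite [v^T _ _]mxE.
  have e2 : \sum_(i < d) x 0 i * (v *m M) 0 i = bil M v x.
    by rewrite /bil [(_ *m x^T) 0 0]mxE; apply: eq_bigr => i _; rewrite [x^T _ _]mxE mulrC.
  rewrite big_split /= e1 e2 -(bilC x v sym); lra.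
have hs : forall (g dg : 'I_d -> V -> R), (forall i, is_diff x (g i) (dg i)) ->
    is_diff x (\sum_i g i) (\sum_i dg i).
  by move=> g dg H; rewrite !fct_sumE; apply: is_diff_sum.
apply: is_diffD; apply: is_diffD.
- apply: is_diffZ; apply: hs => k.
  exact: (is_diffM (is_diff_lin M k x) (is_diff_coord k x)).
- apply: hs => k; exact: is_diffZ (is_diff_coord k x).
Qed.


Lemma dot_delta (u : V) j : dot u (delta_mx 0 j) = u 0 j.
Proof.
rewrite /dot (bigD1 j) //= big1 ?addr0; first by rewrite mxE !eqxx mulr1.
by move=> k /negPf kj; rewrite mxE kj andbF mulr0.
Qed.

Lemma dot_ext (u w : V) : (forall v, dot u v = dot w v) -> u = w.
Proof. by move=> H; apply/rowP => j; rewrite -!dot_delta H. Qed.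

Lemma bilDl M (x y z : V) : bil M (x + y) z = bil M x z + bil M y z.
Proof. by rewrite /bil !mulmxDl mxE. Qed.
Lemma bilZl M a (x z : V) : bil M (a *: x) z = a * bil M x z.
Proof. by rewrite /bil -!scalemxAl mxE. Qed.
Lemma bilNl M (x z : V) : bil M (- x) z = - bil M x z.
Proof. by rewrite -scaleN1r bilZl mulN1r. Qed.
Lemma bilBl M (x y z : V) : bil M (x - y) z = bil M x z - bil M y z.
Proof. by rewrite bilDl bilNl. Qed.
Lemma bilDr M (x y z : V) : bil M z (x + y) = bil M z x + bil M z y.
Proof. by rewrite /bil linearD /= !mulmxDr mxE. Qed.
Lemma bilZr M a (x z : V) : bil M z (a *: x) = a * bil M z x.
Proof. by rewrite /bil linearZ /= -!scalemxAr mxE. Qed.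
Lemma bilNr M (x z : V) : bil M z (- x) = - bil M z x.
Proof. by rewrite -scaleN1r bilZr mulN1r. Qed.
Lemma bilBr M (x y z : V) : bil M z (x - y) = bil M z x - bil M z y.
Proof. by rewrite bilDr bilNr. Qed.

Lemma dot_bil M (x v : V) : dot (x *m M) v = bil M x v.
Proof. by rewrite dotE. Qed.

Lemma grad_quad M b c (x : V) : M^T = M -> grad (quad M b c) x = x *m M + b.
Proof.
move=> sym; apply: dot_ext => v.
rewrite dot_grad (@diff_val _ _ _ _ _ _ _ (quad_is_diff b c x sym)).
by rewrite dotDl dot_bil.
Qed.

Lemma bregman_quad M b c (x y : V) : M^T = M ->
  bregman (quad M b c) x y = 2^-1 * bil M (x - y) (x - y).
Proof.
move=> sym; rewrite /bregman grad_quad // dotDl dot_bil /quad.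
rewrite !bilBl !bilBr !dotBr (bilC y x sym).
rewrite -/(bil M x x) -/(bil M y y); lra.
Qed.

End S.

Section S.
Variables (R : realType) (d : nat).
Local Notation V := 'rV[R]_d.

Lemma bregman_ge0 (f : V -> R) x y :
  convex_fun f -> differentiable f y -> 0 <= bregman f x y.
Proof.
move=> cf df; rewrite /bregman dot_grad -deriveE //.
set v := x - y.
have := @diff_derivable _ _ _ f y v df; rewrite /derivable => /cvg_ex [l hl].
have -> : 'D_v f y = l.
  by rewrite /derive; apply: cvg_lim.
have hr := cvg_dnbhs_at_right hl.
rewrite subr_ge0.
apply: (cvgr_to_le hr).
near=> h.
have h0 : 0 < h by near: h; exact: nbhs_right_gt.
have h1 : h < 1 by near: h; exact: nbhs_right_lt.
rewrite /= /shift.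
have e : h *: v + y = (1 - h) *: y + h *: x.
  by rewrite /v scalerBr scalerBl scale1r -addrA [- _ + y]addrC [RHS]addrC.
rewrite e.
have := cf y x h; rewrite (ltW h0) (ltW h1) => /(_ isT) hc.
rewrite -[_ *: _]/(h^-1 * _) ler_pdivrMl //.
lra.
Unshelve. all: by end_near.
Qed.

End S.

Section S.
Variables (R : realType) (d : nat).
Local Notation V := 'rV[R]_d.
Variable (A : 'M[R]_d).
Hypothesis symA : A^T = A.
Hypothesis pdA : forall v : V, v != 0 -> 0 < (v *m A *m v^T) 0 0.

Lemma psdA (v : V) : 0 <= bil A v v.
Proof.
have [->|nz] := eqVneq v 0; first by rewrite /bil mul0mx mul0mx mxE.
exact/ltW/pdA.
Qed.

Lemma unitA : A \in unitmx.
Proof.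
rewrite unitmxE unitfE; apply/negP => /det0P [v nz vA].
by have := pdA nz; rewrite vA mul0mx mxE ltxx.
Qed.

Local Notation M := (invmx A).

Lemma symM : M^T = M.
Proof. by rewrite trmx_inv symA. Qed.

Lemma MA : M *m A = 1%:M.
Proof. exact: (mulVmx unitA). Qed.
Lemma AM : A *m M = 1%:M.
Proof. exact: (mulmxV unitA). Qed.

Lemma bilA_M (w z : V) : bil A (w *m M) z = dot w z.
Proof. by rewrite /bil -(mulmxA w) MA mulmx1 dotE. Qed.

Lemma bilA_MM (w : V) : bil A (w *m M) (w *m M) = bil M w w.
Proof. by rewrite bilA_M dotE trmx_mul symM mulmxA. Qed.

Lemma psdM (v : V) : 0 <= bil M v v.
Proof. by rewrite -bilA_MM psdA. Qed.

Lemma conj_quad b c :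
  conj_fun (quad A b c) = quad M (- (b *m M)) (2^-1 * bil M b b - c).
Proof.
apply/funext => y.
set w := y - b.
set V0 := 2^-1 * bil M w w - c.
have key : forall x, V0 - (dot y x - quad A b c x)
     = 2^-1 * bil A (x - w *m M) (x - w *m M).
  move=> x; rewrite /V0 /quad -/(bil A x x) !bilBl !bilBr bilA_MM.
  rewrite (bilC x (w *m M) symA) bilA_M /w dotBl !bilBl !bilBr (bilC b y symM); lra.
have ub : ubound (range (fun x : V => dot y x - quad A b c x)) V0.
  move=> _ [x _ <-]; rewrite -subr_ge0 key.
  by apply: mulr_ge0; [lra | exact: psdA].
have inS : range (fun x : V => dot y x - quad A b c x) V0.
  exists (w *m M) => //; apply/eqP; rewrite eq_sym -subr_eq0 key subrr.
  by rewrite /bil !mul0mx mxE mulr0.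
have -> : conj_fun (quad A b c) y = V0.
  apply/eqP; rewrite eq_le; apply/andP; split.
    by apply: ge_sup => //; exists V0.
  by apply: ub_le_sup => //; exists V0.
rewrite /V0 /w /quad -/(bil M y y) !bilBl !bilBr.
rewrite dotNl dot_bil (bilC b y symM); lra.
Qed.

Lemma gain1 b c : gain_condition (quad A b c) (fun _ _ _ => 1).
Proof.
move=> x y v lam _; rewrite conj_quad !bregman_quad ?symM //.
rewrite addrAC subrr add0r addrAC subrr add0r bilZl bilZr.
rewrite le_eqVlt; apply/orP; left; apply/eqP; ring.
Qed.

End S.

Section S.
Variables (R : realType) (d n : nat).
Local Notation V := 'rV[R]_d.
Variables (A : 'M[R]_d) (b : V) (c : R) (F : 'I_n -> V -> R) (L mu : R)
  (xstar x0 : V) (X : seq 'I_n -> V).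
Local Notation h := (quad A b c).
Local Notation f := (fun x => n%:R^-1 * \sum_(i < n) F i x).
Local Notation eta := ((8 * L)^-1).
Local Notation M := (invmx A).
Hypothesis n0 : (0 < n)%N.
Hypothesis symA : A^T = A.
Hypothesis pdA : forall v : V, v != 0 -> 0 < (v *m A *m v^T) 0 0.
Hypothesis diffF : forall i, differentiable_everywhere (F i).
Hypothesis convF : forall i, convex_fun (F i).
Hypothesis smoothF : forall i, rel_smooth L (F i) h.
Hypothesis L0 : 0 < L.
Hypothesis strong : rel_strongly_convex mu f h.
Hypothesis mu0 : 0 < mu.
Hypothesis gradf0 : grad f xstar = 0.
Hypothesis iter : is_saga_iterates x0 X F h eta.

Lemma grad_f (x : V) : grad f x = n%:R^-1 *: \sum_(i < n) grad (F i) x.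
Proof.
apply: dot_ext => v; rewrite dot_grad dotZl dot_suml.
have hd : is_diff x (fun y => \sum_(i < n) F i y) (fun v => \sum_(i < n) 'd (F i) x v).
  by apply: is_diff_sum => i; apply: differentiableP; apply: diffF.
have hd2 := is_diffZ (n%:R^-1) hd.
have -> : f = n%:R^-1 *: (fun y => \sum_(i < n) F i y) by [].
rewrite (@diff_val _ _ _ _ _ _ _ hd2) /=.
by congr (_ * _); apply: eq_bigr => i _; rewrite dot_grad.
Qed.

Lemma bregman_f (x y : V) :
  bregman f x y = n%:R^-1 * \sum_(i < n) bregman (F i) x y.
Proof.
rewrite /bregman grad_f dotZl dot_suml -!mulrBr -!sumrB.
by congr (_ * _); apply: eq_bigr.
Qed.

Lemma step (s : seq 'I_n) (i : 'I_n) :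
  X (i :: s) = X s - eta *: (saga_g x0 X F s i *m M).
Proof.
have := iter.2 s i; rewrite !grad_quad // => /(congr1 (fun z => (z - b) *m M)).
rewrite addrK -(addrAC _ (- _)) addrK -!mulmxA AM ?mulmx1 // mulmxBl -!mulmxA AM // mulmx1.
by rewrite -scalemxAl.
Qed.

Lemma Dh_ge0 (x y : V) : 0 <= bregman h x y.
Proof. rewrite bregman_quad //; apply: mulr_ge0; [lra | exact: psdA]. Qed.

Lemma DF_ge0 i (x y : V) : 0 <= bregman (F i) x y.
Proof. exact: bregman_ge0 (convF i) (diffF i y). Qed.

Lemma bilM_dot (w : V) : dot w (w *m M) = bil M w w.
Proof. by rewrite dotE trmx_mul (symM symA) mulmxA. Qed.

Lemma coco_core (x y gx gy : V) (Fx Fy : R) (G : V -> R) :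
  (forall z, G z - Fx - dot gx (z - x) <= L * (2^-1 * bil A (z - x) (z - x))) ->
  (forall z, 0 <= G z - Fy - dot gy (z - y)) ->
  bil M (gx - gy) (gx - gy) <= 2 * L * (Fx - Fy - dot gy (x - y)).
Proof.
move=> hs hc.
set w := gx - gy.
set q := bil M w w.
set z := x + (- L^-1) *: (w *m M).
have zx : z - x = (- L^-1) *: (w *m M) by rewrite /z addrAC subrr add0r.
have h1 := hs z.
have h2 := hc z.
have hL : L * L^-1 = 1 by rewrite mulfV // gt_eqF.
have hb : bil A (z - x) (z - x) = L^-1 * L^-1 * q.
  by rewrite zx bilZl bilZr bilA_MM // !mulNr mulrN opprK mulrA.
have e0 : L * (2^-1 * (L^-1 * L^-1 * q)) = 2^-1 * (L^-1 * q) * (L * L^-1) by ring.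
have e1 : dot gx (z - x) = dot gy (z - x) - L^-1 * q.
  have E : dot gx (w *m M) = dot gy (w *m M) + q.
    by rewrite /q -bilM_dot /w dotBl addrCA subrr addr0.
  by rewrite zx !dotZr E mulrDr !mulNr.
have e2 : dot gy (z - y) = dot gy (z - x) + dot gy (x - y).
  by rewrite -dotDr addrA subrK.
rewrite e1 hb e0 hL mulr1 in h1; rewrite e2 in h2.
have H : L^-1 * q <= 2 * (Fx - Fy - dot gy (x - y)).
  move: (L^-1 * q) (dot gy (z - x)) (dot gy (x - y)) h1 h2 => a a1 a2 h1 h2.
  lra.
have := ler_wpM2l (ltW L0) H.
by rewrite mulrA hL mul1r mulrCA mulrA.
Qed.

Lemma cocoercive i (x y : V) :
  bil M (grad (F i) x - grad (F i) y) (grad (F i) x - grad (F i) y)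
   <= 2 * L * bregman (F i) x y.
Proof.
apply: (@coco_core x y _ _ (F i x) (F i y) (F i)).
  by move=> z; have := smoothF i z x; rewrite bregman_quad.
by move=> z; exact: (DF_ge0 i z y).
Qed.

Local Notation Q v := (bil M v v).

Lemma bilMC (p q : V) : bil M p q = bil M q p.
Proof. exact: bilC (symM symA). Qed.

Lemma QB (p q : V) : Q (p - q) <= 2 * Q p + 2 * Q q.
Proof.
have := psdM symA pdA (p + q).
rewrite !bilBl !bilBr !bilDl !bilDr (bilMC q p).
move: (bil M p p) (bil M q q) (bil M p q) => a1 a2 a3; lra.
Qed.

Lemma bil_suml (g : 'I_n -> V) (z : V) :
  bil M (\sum_i g i) z = \sum_i bil M (g i) z.
Proof.
rewrite -dot_bil mulmx_suml dot_suml; apply: eq_bigr => i _; exact: dot_bil.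
Qed.

Lemma sum_const_n (a : R) : \sum_(i < n) a = n%:R * a.
Proof. by rewrite sumr_const card_ord mulr_natl. Qed.

Lemma variance (B : 'I_n -> V) :
  \sum_i Q (B i - n%:R^-1 *: \sum_j B j) <= \sum_i Q (B i).
Proof.
set bb := n%:R^-1 *: \sum_j B j.
have hn : n%:R != 0 :> R by rewrite pnatr_eq0 -lt0n.
have SB : \sum_j B j = n%:R *: bb by rewrite /bb scalerA mulfV // scale1r.
have E : forall i, Q (B i - bb) = Q (B i) - 2 * bil M (B i) bb + Q bb.
  move=> i; rewrite !bilBl !bilBr (bilMC bb (B i)).
  move: (Q (B i)) (Q bb) (bil M (B i) bb) => a1 a2 a3; lra.
rewrite (eq_bigr _ (fun i _ => E i)) !big_split /= sumrN -mulr_sumr -bil_suml SB bilZl.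
rewrite sum_const_n.
have := psdM symA pdA bb.
move: (\sum_i Q (B i)) (Q bb) => a1 a2 h.
have : 0 <= n%:R * a2 :> R by apply: mulr_ge0.
lra.
Qed.

Lemma quadstep (x g : V) (e : R) :
  2^-1 * bil A (xstar - (x - e *: (g *m M))) (xstar - (x - e *: (g *m M)))
  = 2^-1 * bil A (xstar - x) (xstar - x) + e * dot g (xstar - x) + e ^+ 2 / 2 * Q g.
Proof.
have -> : xstar - (x - e *: (g *m M)) = (xstar - x) + e *: (g *m M).
  by apply/rowP => k; rewrite !mxE; ring.
move: (xstar - x) => u.
rewrite !bilDl !bilDr !bilZl !bilZr (bilA_M pdA) (bilC _ (g *m M) symA) (bilA_M pdA).
rewrite (bilA_MM symA pdA).
move: (bil A u u) (dot g u) (Q g) => a1 a2 a3.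
by rewrite expr2; field.
Qed.

Lemma one_step_abs (G : 'I_n -> V -> V) (D : 'I_n -> V -> R) (x : V)
  (phi : 'I_n -> V) (Dfs m : R) :
  \sum_j G j xstar = 0 ->
  (forall i p, Q (G i p - G i xstar) <= 2 * L * D i p) ->
  (forall i p, 0 <= D i p) ->
  dot (n%:R^-1 *: \sum_i G i x) (xstar - x) = - (n%:R^-1 * \sum_i D i x) - Dfs ->
  mu * (2^-1 * bil A (xstar - x) (xstar - x)) <= Dfs ->
  m * (8 * L) <= mu -> m * (2 * n%:R) <= 1 ->
  n%:R^-1 * \sum_i ((8 * L) * (2^-1 * bil A
       (xstar - (x - (8 * L)^-1 *: ((G i x - G i (phi i) + n%:R^-1 *: \sum_j G j (phi j)) *m M)))
       (xstar - (x - (8 * L)^-1 *: ((G i x - G i (phi i) + n%:R^-1 *: \sum_j G j (phi j)) *m M))))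
      + n%:R / 2 * (n%:R^-1 * \sum_j D j (if j == i then x else phi j)))
  <= (1 - m) * ((8 * L) * (2^-1 * bil A (xstar - x) (xstar - x))
                + n%:R / 2 * (n%:R^-1 * \sum_j D j (phi j))).
Proof.
move=> hG0 hcoco hD0 hdot hstr hm1 hm2.
set N := n%:R.
have N0 : 0 < N by rewrite ltr0n.
have hN : N != 0 by rewrite gt_eqF.
set e := (8 * L)^-1.
have hKe : 8 * L * e = 1 by rewrite mulfV // gt_eqF // mulr_gt0.
set g := fun i => G i x - G i (phi i) + N^-1 *: \sum_j G j (phi j).
rewrite -/(g _).
set u := xstar - x.
set Dh := 2^-1 * bil A u u.
set SX := \sum_i D i x.
set SP := \sum_j D j (phi j).
have T1 : forall i, 8 * L * (2^-1 * bil A (xstar - (x - e *: (g i *m M))) (xstar - (x - e *: (g i *m M))))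
    = 8 * L * Dh + dot (g i) u + e / 2 * Q (g i).
  move=> i; rewrite quadstep -/u -/Dh.
  have -> : 8 * L * (Dh + e * dot (g i) u + e ^+ 2 / 2 * Q (g i)) =
     8 * L * Dh + (8 * L * e) * dot (g i) u + (8 * L * e) * (e / 2) * Q (g i) by ring.
  by rewrite hKe !mul1r.
have T4 : forall i, \sum_j D j (if j == i then x else phi j) = SP - D i (phi i) + D i x.
  move=> i; rewrite /SP (bigD1 i) //= [in RHS](bigD1 i) //= eqxx.
  have -> : \sum_(j < n | j != i) D j (if j == i then x else phi j) = \sum_(j < n | j != i) D j (phi j).
    by apply: eq_bigr => j /negPf ->.
  move: (D i x) (D i (phi i)) (\sum_(j < n | j != i) D j (phi j)) => a1 a2 a3; lra.
rewrite (eq_bigr (fun i => 8 * L * Dh + dot (g i) u + e / 2 * Q (g i) + N / 2 * (N^-1 * (SP - D i (phi i) + D i x)))); last first.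
  by move=> i _; rewrite T1 T4.
have Sg : \sum_i g i = \sum_i G i x.
  rewrite /g !big_split /= sumrN sumr_const card_ord -scaler_nat scalerA mulfV //.
  by rewrite scale1r subrK.
have S2 : \sum_i dot (g i) u = N * (- (N^-1 * SX) - Dfs).
  by rewrite -dot_suml Sg -hdot dotZl mulrA mulfV // mul1r.
have S4 : \sum_i N / 2 * (N^-1 * (SP - D i (phi i) + D i x)) = 2^-1 * (N * SP - SP + SX).
  have e4 : forall t, N / 2 * (N^-1 * t) = 2^-1 * t.
    by move=> t; rewrite mulrCA !mulrA mulVf // mul1r.
  rewrite (eq_bigr _ (fun i _ => e4 _)) -mulr_sumr !big_split /= sumrN sum_const_n.
  by [].
set bbar := N^-1 *: \sum_j (G j (phi j) - G j xstar).
have hbb : N^-1 *: \sum_j G j (phi j) = bbar by rewrite /bbar sumrB hG0 subr0.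
have gdec : forall i, g i = (G i x - G i xstar) - ((G i (phi i) - G i xstar) - bbar).
  move=> i; rewrite /g hbb.
  move: (G i x) (G i xstar) (G i (phi i)) => p1 p2 p3.
  by apply/rowP => k; rewrite !mxE; ring.
have S3 : \sum_i Q (g i) <= 4 * L * (SX + SP).
  apply: (@le_trans _ _ (\sum_i (2 * Q (G i x - G i xstar) + 2 * Q ((G i (phi i) - G i xstar) - bbar)))).
    by apply: ler_sum => i _; rewrite gdec; apply: QB.
  rewrite big_split /= -!mulr_sumr.
  have V1 := variance (fun j => G j (phi j) - G j xstar).
  have C1 : \sum_i Q (G i x - G i xstar) <= 2 * L * SX.
    by rewrite /SX mulr_sumr; apply: ler_sum => i _; exact: hcoco.
  have C2 : \sum_i Q (G i (phi i) - G i xstar) <= 2 * L * SP.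
    by rewrite /SP mulr_sumr; apply: ler_sum => i _; exact: hcoco.
  move: V1 C1 C2; rewrite -/bbar.
  move: (\sum_i Q (G i x - G i xstar)) (\sum_i Q (G i (phi i) - G i xstar)) (\sum_i Q (G i (phi i) - G i xstar - bbar)) => a1 a2 a3.
  move=> V1 C1 C2.
  have -> : 4 * L * (SX + SP) = 2 * (2 * L * SX) + 2 * (2 * L * SP) by ring.
  move: (2 * L * SX) (2 * L * SP) C1 C2 => b1 b2 C1 C2.
  lra.
rewrite !big_split /= sum_const_n S2 S4 -mulr_sumr.
set W := \sum_i Q (g i).
have hDh0 : 0 <= Dh by apply: mulr_ge0; [lra | exact: psdA].
have hSX : 0 <= SX by apply: sumr_ge0 => i _.
have hSP : 0 <= SP by apply: sumr_ge0 => i _.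
have he0 : 0 <= e by rewrite invr_ge0; apply: mulr_ge0; [lra | exact: ltW].
have hW : e / 2 * W <= 4^-1 * (SX + SP).
  have h2 : 0 <= e / 2 by apply: mulr_ge0 => //; lra.
  have := ler_wpM2l h2 S3.
  have heL : L * e = 8^-1.
    have : 8 * (L * e) = 1 by rewrite mulrA.
    move: (L * e) => t ht; lra.
  have -> : e / 2 * (4 * L * (SX + SP)) = 2 * (L * e) * (SX + SP) by field.
  rewrite heL -/W => h.
  have -> : 4^-1 * (SX + SP) = 2 * 8^-1 * (SX + SP) by field.
  exact: h.
have hW1 : N^-1 * (e / 2 * W) <= 4^-1 * (N^-1 * SX + N^-1 * SP).
  rewrite -mulrDr [X in _ <= X]mulrCA; apply: ler_wpM2l hW; by rewrite invr_ge0 ltW.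
have f1 : m * (8 * L) * Dh <= mu * Dh by apply: ler_wpM2r.
have f2 : m * SP <= 2^-1 * (N^-1 * SP).
  have -> : m * SP = (m * (2 * N)) * (2^-1 * (N^-1 * SP)) by field.
  rewrite -[X in _ <= X]mul1r; apply: ler_wpM2r => //.
  by apply: mulr_ge0; [lra | apply: mulr_ge0 => //; rewrite invr_ge0 ltW].
have hX1 : 0 <= N^-1 * SX by apply: mulr_ge0 => //; rewrite invr_ge0 ltW.
have EL : N^-1 * (N * (8 * L * Dh) + N * (- (N^-1 * SX) - Dfs) + e / 2 * W + 2^-1 * (N * SP - SP + SX))
   = 8 * L * Dh - N^-1 * SX - Dfs + N^-1 * (e / 2 * W) + 2^-1 * (SP - N^-1 * SP + N^-1 * SX) by field.
have ER : (1 - m) * (8 * L * Dh + N / 2 * (N^-1 * SP))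
   = 8 * L * Dh + 2^-1 * SP - m * (8 * L) * Dh - 2^-1 * (m * SP) by field.
rewrite EL ER.
move: hW1 f1 f2 hX1 hstr.
move: (8 * L * Dh) (N^-1 * SX) (N^-1 * SP) (N^-1 * (e / 2 * W)) (m * (8 * L) * Dh) (mu * Dh) (m * SP) => a1 a2 a3 a4 a5 a6 a7.
move=> *; lra.
Qed.

Lemma hdot_gen (x : V) :
  dot (grad f x) (xstar - x) = - bregman f x xstar - bregman f xstar x.
Proof.
rewrite /bregman gradf0 dot0l.
move: (dot (grad f x) (xstar - x)) => a.
move: (n%:R^-1 * \sum_(i < n) F i x) (n%:R^-1 * \sum_(i < n) F i xstar) => a1 a2.
lra.
Qed.

Lemma sumG0 : \sum_j grad (F j) xstar = 0.
Proof.
have hn : (n%:R^-1 : R) != 0 by rewrite invr_eq0 pnatr_eq0 -lt0n.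
by have := gradf0; rewrite grad_f => /eqP; rewrite scaler_eq0 (negPf hn) /= => /eqP.
Qed.

Lemma one_step (s : seq 'I_n) (m : R) :
  m * (8 * L) <= mu -> m * (2 * n%:R) <= 1 ->
  n%:R^-1 * \sum_i saga_psi x0 X F h eta xstar (i :: s)
    <= (1 - m) * saga_psi x0 X F h eta xstar s.
Proof.
move=> hm1 hm2.
rewrite /saga_psi /saga_H invrK bregman_quad //.
have E : forall i, bregman h xstar (X (i :: s)) =
   2^-1 * bil A (xstar - (X s - eta *: (saga_g x0 X F s i *m M)))
                (xstar - (X s - eta *: (saga_g x0 X F s i *m M))).
  by move=> i; rewrite step bregman_quad.
under eq_bigr => i _ do rewrite E /=.
have hd : dot (n%:R^-1 *: \sum_i grad (F i) (X s)) (xstar - X s)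
   = - (n%:R^-1 * \sum_i bregman (F i) (X s) xstar) - bregman f xstar (X s).
  by rewrite -grad_f -bregman_f hdot_gen.
have hs : mu * (2^-1 * bil A (xstar - X s) (xstar - X s)) <= bregman f xstar (X s).
  by have := strong xstar (X s); rewrite bregman_quad.
exact: (@one_step_abs (fun i => grad (F i)) (fun i p => bregman (F i) p xstar)
          (X s) (saga_phi x0 X s) _ m sumG0 (fun i p => cocoercive i p xstar)
          (fun i p => DF_ge0 i p xstar) hd hs hm1 hm2).
Qed.

End S.

Section E.
Variables (R : realType) (n : nat).

Lemma sum_tuple_S (t : nat) (Y : seq 'I_n -> R) :
  \sum_(s : t.+1.-tuple 'I_n) Y s = \sum_(s : t.-tuple 'I_n) \sum_(i < n) Y (i :: s).
Proof.
rewrite exchange_big pair_bigA /=.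
rewrite (reindex (fun p : 'I_n * t.-tuple 'I_n => [tuple of p.1 :: p.2])) //=.
exists (fun s : t.+1.-tuple 'I_n => (thead s, [tuple of behead s])).
  by move=> [i s] _ /=; congr (_, _); apply: val_inj.
by move=> s _; case: s / tupleP => x u; apply: val_inj.
Qed.

Lemma expect0 (Y : seq 'I_n -> R) : expect_t 0 Y = Y [::].
Proof.
rewrite /expect_t expr0 invr1 mul1r (big_pred1 [tuple]) //.
by move=> s; apply/esym/eqP/tuple0.
Qed.

Lemma expectS (t : nat) (Y : seq 'I_n -> R) : (0 < n)%N ->
  expect_t t.+1 Y = expect_t t (fun s => n%:R^-1 * \sum_(i < n) Y (i :: s)).
Proof.
move=> n0; rewrite /expect_t sum_tuple_S -mulr_sumr exprS invfM mulrA.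
by rewrite [_ * n%:R^-1]mulrC.
Qed.

Lemma expect_le (t : nat) (Y Z : seq 'I_n -> R) :
  (forall s, Y s <= Z s) -> expect_t t Y <= expect_t t Z.
Proof.
move=> H; rewrite /expect_t; apply: ler_wpM2l.
  by rewrite invr_ge0 exprn_ge0.
by apply: ler_sum => s _.
Qed.

Lemma expectZ (t : nat) (a : R) (Y : seq 'I_n -> R) :
  expect_t t (fun s => a * Y s) = a * expect_t t Y.
Proof. by rewrite /expect_t -mulr_sumr mulrCA. Qed.

End E.

Unset Implicit Arguments.

Theorem corollary1 (R : realType) (d n : nat)
  (A : 'M[R]_d) (b : 'rV[R]_d) (c : R)
  (F : 'I_n -> 'rV[R]_d -> R) (L mu : R) (xstar x0 : 'rV[R]_d)
  (X : seq 'I_n -> 'rV[R]_d) :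
  let h := quad A b c in
  let f := fun x => n%:R^-1 * \sum_(i < n) F i x in
  let eta := (8 * L)^-1 in
  let kappa := L / mu in
  (0 < n)%N ->
  A^T = A ->
  (forall v : 'rV[R]_d, v != 0 -> 0 < (v *m A *m v^T) 0 0) ->
  (forall i, differentiable_everywhere (F i)) ->
  (forall i, convex_fun (F i)) ->
  (forall i, rel_smooth L (F i) h) ->
  0 < L ->
  rel_strongly_convex mu f h ->
  0 < mu ->
  (forall x, f xstar <= f x) ->
  grad f xstar = 0 ->
  is_saga_iterates x0 X F h eta ->
  gain_condition h (fun _ _ _ => 1) /\
  forall t : nat,
    expect_t t (saga_psi x0 X F h eta xstar)
      <= (1 - Num.min (8 * kappa)^-1 (2 * n%:R)^-1) ^+ t
         * saga_psi x0 X F h eta xstar [::].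
Proof.
move=> h f eta kappa n0 symA pdA diffF convF smoothF L0 strong mu0 fmin gradf0 iter.
split; first exact: gain1.
set m := Num.min _ _.
have N0 : 0 < n%:R :> R by rewrite ltr0n.
have hm1 : m * (8 * L) <= mu.
  have : m <= (8 * kappa)^-1 by rewrite /m ge_min lexx.
  move/(ler_wpM2r (_ : 0 <= 8 * L)).
  have -> : (8 * kappa)^-1 * (8 * L) = mu.
    by rewrite /kappa; field; rewrite ?gt_eqF // ?mulr_gt0.
  by apply; apply: mulr_ge0; [lra | exact: ltW].
have hm2 : m * (2 * n%:R) <= 1.
  have : m <= (2 * n%:R)^-1 by rewrite /m ge_min lexx orbT.
  move/(ler_wpM2r (_ : 0 <= 2 * n%:R)).
  rewrite mulVf ?gt_eqF ?mulr_gt0 //; apply; apply: mulr_ge0; lra.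
have hm0 : 0 <= 1 - m.
  have m0 : 0 < m.
    rewrite /m lt_min !invr_gt0; apply/andP; split; apply: mulr_gt0 => //.
    by rewrite /kappa divr_gt0.
  have N1 : (1 : R) <= n%:R by rewrite ler1n.
  have m2 : m * 2 <= m * (2 * n%:R) by apply: ler_wpM2l; [exact: ltW | lra].
  move: (m * (2 * n%:R)) hm2 m2 => t h1 h2; lra.
elim=> [|t IH].
  by rewrite expect0 expr0 mul1r.
rewrite expectS // exprS -mulrA.
apply: (le_trans _ (ler_wpM2l hm0 IH)).
rewrite -expectZ; apply: expect_le => s.
exact: (one_step n0 symA pdA diffF convF smoothF L0 strong gradf0 iter s hm1 hm2).
Qed.
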